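(* Let $\omega\in(0,1/2)$ and $1/\{2(1-\omega)\}<\gamma<1$. Then $$\sup_{\mathbf u\in[0,1]^d:\ g(\mathbf u)\ge n^{-\gamma}}\Big|\int_{[0,1]^d}\frac{g(\mathbf w)^\omega}{g(\mathbf u)^\omega}\,\mathrm d\mu_{n,\mathbf u}(\mathbf w)-1\Big|=\mathrm O\{n^{-(1-\gamma)/2}\log n\},\qquad n\to\infty.$$
   Context: $d\ge2$; $g(\mathbf u)=\bigwedge_{j=1}^d\{u_j\wedge\bigvee_{k\ne j}(1-u_k)\}$ for $\mathbf u\in[0,1]^d$ ($\wedge$ = min, $\vee$ = max). For $\mathbf u\in[0,1]^d$, $\mu_{n,\mathbf u}$ is the law of $(S_1/n,\dots,S_d/n)$ with $S_1,\dots,S_d$ independent, $S_j\sim\mathrm{Bin}(n,u_j)$. *)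

(* Defs.v *)
From HB Require Import structures.
From mathcomp Require Import all_boot all_order all_algebra.
From mathcomp Require Import reals exp.
Set Implicit Arguments. Unset Strict Implicit. Unset Printing Implicit Defensive.
Import Order.TTheory GRing.Theory Num.Theory.
Local Open Scope ring_scope.

(* g(u) = min_j { u_j /\ max_{k <> j} (1 - u_k) }.
   The identity elements (1 for min, 0 for max) are harmless on [0,1]^d with d >= 2. *)
Definition gfun (R : realType) (d : nat) (u : 'I_d -> R) : R :=
  \big[Num.min/1]_(j < d) Num.min (u j) (\big[Num.max/0]_(k < d | k != j) (1 - u k)).

(* probability mass of mu_{n,u} at the point (k_1/n, ..., k_d/n):
   product of independent Bin(n, u_j) masses. *)
Definition binom_mass (R : realType) (d n : nat) (u : 'I_d -> R)
    (k : {ffun 'I_d -> 'I_n.+1}) : R :=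
  \prod_(j < d) ('C(n, k j)%:R * u j ^+ k j * (1 - u j) ^+ (n - k j)).

(* integral of f against mu_{n,u}, the law of (S_1/n, ..., S_d/n);
   mu_{n,u} is supported on the finite grid {0,1/n,...,1}^d. *)
Definition binom_integral (R : realType) (d n : nat) (u : 'I_d -> R)
    (f : ('I_d -> R) -> R) : R :=
  \sum_(k : {ffun 'I_d -> 'I_n.+1})
     binom_mass u k * f (fun j => (k j)%:R / n%:R).

(* Main.v *)
Require Import Defs.
From HB Require Import structures.
From mathcomp Require Import all_boot all_order all_algebra.
From mathcomp Require Import reals exp.
From mathcomp Require Import ring lra zify.
Import Order.TTheory GRing.Theory Num.Theory.
Local Open Scope ring_scope.
Module Aux.
Set Implicit Arguments. Unset Strict Implicit.
Section Bin.
Variable R : realType.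
Implicit Types x : R.

Definition bm x (n a : nat) : R := 'C(n, a)%:R * x ^+ a * (1 - x) ^+ (n - a).

Lemma L0 x n : \sum_(a < n.+1) bm x n a = 1.
Proof.
have := exprDn (1 - x) x n; rewrite subrK expr1n => ->.
apply: eq_bigr => a _; rewrite /bm -mulr_natl; ring.
Qed.

Lemma Lshift x m (F : nat -> R) :
  \sum_(a < m.+2) a%:R * bm x m.+1 a * F a =
  m.+1%:R * x * \sum_(a < m.+1) bm x m a * F a.+1.
Proof.
rewrite big_ord_recl /= mul0r mul0r add0r mulr_sumr.
apply: eq_bigr => a _; rewrite /bm /bump /= add1n subSS.
have := mul_bin_diag m.+1 a => /= /(congr1 (fun k => k%:R : R)).
rewrite !natrM => H.
rewrite exprS.
transitivity ((a.+1%:R * 'C(m.+1, a.+1)%:R) * x * x ^+ a * (1 - x) ^+ (m - a) * F a.+1); first by ring.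
rewrite -H; ring.
Qed.

Lemma L1 x n : \sum_(a < n.+1) a%:R * bm x n a = n%:R * x.
Proof.
case: n => [|m]; first by rewrite big_ord1 mul0r mul0r.
transitivity (\sum_(a < m.+2) a%:R * bm x m.+1 a * 1).
  by apply: eq_bigr => a _; rewrite mulr1.
rewrite (Lshift x m (fun _ => 1)).
under eq_bigr do rewrite mulr1.
by rewrite L0 mulr1.
Qed.

Lemma L2 x n : \sum_(a < n.+1) a%:R ^+ 2 * bm x n a = n%:R * x * ((n%:R - 1) * x + 1).
Proof.
case: n => [|m]; first by rewrite big_ord1 /=; ring.
transitivity (\sum_(a < m.+2) a%:R * bm x m.+1 a * a%:R).
  by apply: eq_bigr => a _; ring.
rewrite (Lshift x m (fun a => a%:R)).
under eq_bigr do rewrite -natr1 mulrDr mulr1.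
rewrite big_split /= L0.
under eq_bigr do rewrite mulrC.
rewrite L1.
rewrite -addn1 natrD; ring.
Qed.

Lemma Lvar x n : (0 < n)%N ->
  \sum_(a < n.+1) bm x n a * (a%:R / n%:R - x) ^+ 2 = x * (1 - x) / n%:R.
Proof.
move=> n0.
have nz : (n%:R : R) != 0 by rewrite pnatr_eq0 -lt0n.
transitivity (\sum_(a < n.+1) (a%:R ^+ 2 * bm x n a * (n%:R^-1 ^+ 2)
   + (a%:R * bm x n a * (-2 * x / n%:R) + bm x n a * x ^+ 2))).
  by apply: eq_bigr => a _; rewrite /bm; ring.
rewrite big_split big_split /= -!mulr_suml L0 L1 L2.
field; exact: nz.
Qed.

Lemma marg d n (u : 'I_d -> R) (i : 'I_d) (F : nat -> R) :
  \sum_(k : {ffun 'I_d -> 'I_n.+1}) binom_mass u k * F (k i) =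
  \sum_(a < n.+1) bm (u i) n a * F a.
Proof.
pose G := fun (j : 'I_d) (a : 'I_n.+1) => bm (u j) n a * (if j == i then F a else 1).
transitivity (\sum_(k : {ffun 'I_d -> 'I_n.+1}) \prod_(j < d) G j (k j)).
  apply: eq_bigr => k _; rewrite /G big_split /=; congr (_ * _).
  rewrite (bigD1 i) //= eqxx big1 ?mulr1 // => j /negbTE -> //.
rewrite -(bigA_distr_bigA G) (bigD1 i) //= [X in _ * X]big1 ?mulr1.
  by apply: eq_bigr => a _; rewrite /G eqxx.
move=> j /negbTE hj; rewrite /G.
under eq_bigr do rewrite hj mulr1.
exact: (L0 (u j) n).
Qed.

Lemma mass_sum d n (u : 'I_d -> R) : \sum_(k : {ffun 'I_d -> 'I_n.+1}) binom_mass u k = 1.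
Proof.
rewrite /binom_mass -(bigA_distr_bigA (fun j (a : 'I_n.+1) => bm (u j) n a)).
by apply: big1 => j _; exact: L0.
Qed.

Lemma mass_ge0 d n (u : 'I_d -> R) (k : {ffun 'I_d -> 'I_n.+1}) : (forall j, 0 <= u j <= 1) -> 0 <= binom_mass u k.
Proof.
move=> hu; apply: prodr_ge0 => j _; have /andP[h0 h1] := hu j.
apply: mulr_ge0; [apply: mulr_ge0; [exact: ler0n | exact: exprn_ge0] | apply: exprn_ge0; lra].
Qed.
End Bin.
Section G.
Variable R : realType.
Variable d : nat.
Hypothesis hd : (2 <= d)%N.

Definition Tj (w : 'I_d -> R) j :=
  Num.min (w j) (\big[Num.max/0]_(k < d | k != j) (1 - w k)).
Definition Mj (w : 'I_d -> R) j := \big[Num.max/0]_(k < d | k != j) (1 - w k).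

Definition in01 (w : 'I_d -> R) := forall j, 0 <= w j <= 1.

Lemma other (j : 'I_d) : exists k : 'I_d, k != j.
Proof.
have h0 : (0 < d)%N by lia.
have h1 : (1 < d)%N by lia.
case: (eqVneq j (Ordinal h0)) => [->|hj].
  by exists (Ordinal h1); apply/eqP => /(congr1 val).
by exists (Ordinal h0); rewrite eq_sym.
Qed.

Lemma gfun_ge0 w : in01 w -> 0 <= gfun w.
Proof.
move=> hw; rewrite /gfun; apply: le_bigmin => // j _.
rewrite le_min; apply/andP; split; first by case/andP: (hw j).
exact: bigmax_ge_id.
Qed.

Lemma gfun_arg w : in01 w -> exists j, gfun w = Tj w j.
Proof.
move=> hw; have [j0 _] := other (Ordinal (ltnW hd)).
have H : forall i, xpredT i -> Tj w i <= 1.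
  move=> i _; rewrite /Tj ge_min; apply/orP; left; by case/andP: (hw i).
have [i0 _ E] := @eq_bigmin _ _ _ 1 j0 xpredT (Tj w) isT H.
by exists i0; exact: E.
Qed.

Lemma max_arg w j : in01 w -> exists2 k, k != j & Mj w j = 1 - w k.
Proof.
move=> hw; have [k0 hk0] := other j.
have H : forall i, i != j -> 0 <= 1 - w i.
  move=> i _; rewrite subr_ge0; by case/andP: (hw i).
have [i0 hi0 E] := @eq_bigmax _ _ _ 0 k0 (fun k => k != j) (fun k => 1 - w k) hk0 H.
by exists i0; [exact: hi0 | exact: E].
Qed.

Lemma gfun_le w j : gfun w <= Tj w j.
Proof. exact: bigmin_le. Qed.

Lemma le_Mj w j k : k != j -> 1 - w k <= Mj w j.
Proof. move=> h; rewrite /Mj; exact: (@le_bigmax_cond _ _ _ 0 k (fun k => k != j) (fun k => 1 - w k) h). Qed.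


Definition psi (G c v y : R) :=
  if v <= 2 * G then y ^+ 2 / (2 * c) + c / 2 else 4 * G * y ^+ 2 / v ^+ 2.

Lemma psi_ge0 G c v y : 0 <= G -> 0 < c -> 0 <= psi G c v y.
Proof.
move=> hG hc; rewrite /psi; case: ifP => _.
  apply: addr_ge0; apply: divr_ge0 => //; try lra; exact: sqr_ge0.
apply: divr_ge0; last exact: sqr_ge0.
apply: mulr_ge0; [lra| exact: sqr_ge0].
Qed.

Lemma psiN G c v y : psi G c v (- y) = psi G c v y.
Proof. by rewrite /psi sqrrN. Qed.

Lemma absle (t c : R) : 0 < c -> t <= t ^+ 2 / (2 * c) + c / 2.
Proof.
move=> hc; rewrite -subr_ge0.
have -> : t ^+ 2 / (2 * c) + c / 2 - t = (t - c) ^+ 2 / (2 * c).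
  by field; lra.
apply: divr_ge0; [exact: sqr_ge0 | lra].
Qed.

Lemma P2 G c v y : 0 < c -> v <= 2 * G -> `|y| <= psi G c v y.
Proof.
move=> hc hv; rewrite /psi hv -(real_normK (num_real y)); exact: absle.
Qed.

Lemma P3 G c v x : 0 < G -> 0 < c -> G <= v -> 0 <= x -> G - x <= psi G c v (x - v).
Proof.
move=> hG hc hGv hx; case: (leP v (2 * G)) => hv.
  apply: le_trans (@P2 G c v (x - v) hc hv).
  apply: le_trans (_ : v - x <= _); first lra.
  rewrite distrC; exact: ler_norm.
rewrite /psi; have -> : (v <= 2 * G) = false by apply/negbTE; rewrite -ltNge.
have hv0 : 0 < v by lra.
case: (leP G x) => hxG.
  apply: le_trans (_ : 0 <= _); first lra.
  apply: divr_ge0; last exact: sqr_ge0.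
  apply: mulr_ge0; [lra| exact: sqr_ge0].
apply: le_trans (_ : G <= _); first lra.
rewrite ler_pdivlMr; last exact: exprn_gt0.
have h1 : v <= 2 * (v - x) by lra.
have h2 : v ^+ 2 <= 4 * (x - v) ^+ 2 by nra.
nra.
Qed.


Lemma sum_ge_ab (a b : 'I_d -> R) j : (forall i, 0 <= a i) -> (forall i, 0 <= b i) ->
  a j <= \sum_(i < d) (a i + b i) /\ b j <= \sum_(i < d) (a i + b i).
Proof.
move=> ha hb; rewrite (bigD1 j) //=.
have h : 0 <= \sum_(i < d | i != j) (a i + b i).
  by apply: sumr_ge0 => i _; apply: addr_ge0.
have := ha j; have := hb j; split; lra.
Qed.

Lemma min_le_l (x y : R) : Num.min x y <= x.
Proof. by rewrite ge_min lexx. Qed.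
Lemma min_le_r (x y : R) : Num.min x y <= y.
Proof. by rewrite ge_min lexx orbT. Qed.

Lemma gdev (u w : 'I_d -> R) c : in01 u -> in01 w -> 0 < gfun u -> 0 < c ->
  `|gfun w - gfun u| <= \sum_(i < d)
     (psi (gfun u) c (u i) (w i - u i) + psi (gfun u) c (1 - u i) (w i - u i)).
Proof.
move=> hu hw hG hc.
set G := gfun u; set S := \sum_(i < d) _.
have hS : forall j, psi G c (u j) (w j - u j) <= S /\ psi G c (1 - u j) (w j - u j) <= S.
  move=> j; apply: sum_ge_ab => i; apply: psi_ge0 => //; exact: ltW.
have TM : forall (x : 'I_d -> R) j, Tj x j = Num.min (x j) (Mj x j) by [].
rewrite ler_norml; apply/andP; split.
- have [j1 Hj1] := gfun_arg hw; have [k1 hk1 E1] := max_arg j1 hu.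
  have HG := gfun_le u j1; rewrite TM in HG.
  have HG1 : G <= u j1 := le_trans HG (min_le_l _ _).
  have HG2 : G <= 1 - u k1 by rewrite -E1; exact: le_trans HG (min_le_r _ _).
  rewrite Hj1 TM; case: (leP (w j1) (Mj w j1)) => h.
    have := @P3 G c (u j1) (w j1) hG hc HG1 (proj1 (andP (hw j1))).
    have := proj1 (hS j1); lra.
  have hM := le_Mj w hk1.
  have := @P3 G c (1 - u k1) (1 - w k1) hG hc HG2.
  have -> : 1 - w k1 - (1 - u k1) = - (w k1 - u k1) by ring.
  rewrite psiN.
  have hw1 : 0 <= 1 - w k1 by have := hw k1; case/andP => _ ?; lra.
  move=> /(_ hw1).
  have := proj2 (hS k1); lra.
- have [j0 Hj0] := gfun_arg hu.
  have Hw := gfun_le w j0; rewrite TM in Hw.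
  rewrite -/G in Hj0; rewrite Hj0 TM in hG *.
  case: (leP (u j0) (Mj u j0)) => h.
    have Hw1 : gfun w <= w j0 := le_trans Hw (min_le_l _ _).
    have hv : u j0 <= 2 * u j0 by have := hu j0; case/andP => ? ?; lra.
    have := @P2 (u j0) c (u j0) (w j0 - u j0) hc hv.
    have := ler_norm (w j0 - u j0).
    have := proj1 (hS j0).
    rewrite Hj0 TM (min_l h).
    lra.
  have [k hk E] := max_arg j0 hw.
  have Hw1 : gfun w <= 1 - w k by rewrite -E; exact: le_trans Hw (min_le_r _ _).
  have hUk := le_Mj u hk.
  have hM0 : 0 <= Mj u j0 by rewrite /Mj; exact: bigmax_ge_id.
  have hv : 1 - u k <= 2 * Mj u j0 by lra.
  have := @P2 (Mj u j0) c (1 - u k) (w k - u k) hc hv.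
  have := ler_norm (u k - w k); rewrite distrC.
  have := proj2 (hS k).
  rewrite Hj0 TM (min_r (ltW h)).
  lra.
Qed.

End G.
Section P.
Variable R : realType.

Lemma normcmp (s t : R) : (t <= s <= 1) || (1 <= s <= t) -> `|s - 1| <= `|t - 1|.
Proof.
case/orP => /andP [h1 h2].
  rewrite (ler0_norm (_ : s - 1 <= 0)); last lra.
  rewrite (ler0_norm (_ : t - 1 <= 0)); last lra. lra.
rewrite (ger0_norm (_ : 0 <= s - 1)); last lra.
rewrite (ger0_norm (_ : 0 <= t - 1)); last lra. lra.
Qed.

Lemma powfrac (a b om : R) : 0 <= a -> 0 < b -> 0 < om -> om <= 1 ->
  `|a `^ om / b `^ om - 1| <= `|a - b| / b.
Proof.
move=> ha hb ho ho1.
set t := a / b.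
have ht : 0 <= t by apply: divr_ge0 => //; exact: ltW.
have hat : a = t * b by rewrite /t divfK //; exact: lt0r_neq0.
have hbo : 0 < b `^ om by exact: powR_gt0.
rewrite hat powRM //; last exact: ltW.
rewrite mulfK; last exact: lt0r_neq0.
have -> : t * b - b = (t - 1) * b by ring.
rewrite normrM (gtr0_norm hb) mulfK; last exact: lt0r_neq0.
apply: normcmp.
case: (ltrgtP t 0) => [|ht0|->]; first lra.
- case: (leP t 1) => ht1.
    apply/orP; left; apply/andP; split.
      apply: ger1_powR => //; lra.
    rewrite -[X in _ <= X](powRr0 t); apply: ger_powR; [lra | exact: ltW].
  apply/orP; right; apply/andP; split.
    rewrite -[X in X <= _](powRr0 t); apply: ler_powR; [lra | exact: ltW].
  apply: ler1_powR => //; lra.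
- rewrite powR0; last exact: lt0r_neq0.
  apply/orP; left; lra.
Qed.

End P.
Section E.
Variable R : realType.

Lemma Epsi (u G c v : R) n : 0 <= u <= 1 -> (v = u \/ v = 1 - u) -> 0 < G -> 0 < c ->
  (0 < n)%N -> c ^+ 2 = G / n%:R -> n%:R^-1 <= c ->
  \sum_(a < n.+1) bm u n a * psi G c v (a%:R / n%:R - u) <= 2 * c.
Proof.
move=> /andP[hu0 hu1] hv hG hc hn hc2 hNc.
have hN : 0 < (n%:R : R) by rewrite ltr0n.
pose iN := (n%:R : R)^-1.
have {hc2}hc2 : c ^+ 2 = G * iN := hc2.
have {hNc}hNc : iN <= c := hNc.
have hiN : 0 < iN by rewrite invr_gt0.
have hVv : u * (1 - u) = v * (1 - v) by case: hv => ->; ring.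
have hv01 : 0 <= v <= 1 by case: hv => ->; lra.
case/andP: hv01 => hv0 hv1.
case: (boolP (v <= 2 * G)) => hv2.
  have -> : \sum_(a < n.+1) bm u n a * psi G c v (a%:R / n%:R - u) =
     \sum_(a < n.+1) (bm u n a * (a%:R / n%:R - u) ^+ 2 * (2 * c)^-1
                  + bm u n a * (c / 2)).
    by apply: eq_bigr => a _; rewrite /psi hv2; ring.
  rewrite big_split /= -!mulr_suml Lvar // L0 -/iN.
  have h1 : u * (1 - u) / n%:R <= 2 * c ^+ 2.
    rewrite hc2 -/iN; rewrite /iN; rewrite ler_pdivrMr //.
    rewrite hVv; have : v * (1 - v) <= 2 * G by nra.
    move=> h; apply: le_trans h _; rewrite -mulrA divfK //; exact: lt0r_neq0.
  have h2 : u * (1 - u) / n%:R * (2 * c)^-1 <= c.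
    rewrite ler_pdivrMr; last lra. nra.
  rewrite /iN; lra.
have hv2' : 2 * G < v by rewrite ltNge.
have hv0' : 0 < v by lra.
have -> : \sum_(a < n.+1) bm u n a * psi G c v (a%:R / n%:R - u) =
  \sum_(a < n.+1) bm u n a * (a%:R / n%:R - u) ^+ 2 * (4 * G / v ^+ 2).
  by apply: eq_bigr => a _; rewrite /psi (negbTE hv2); ring.
rewrite -mulr_suml Lvar // -/iN.
rewrite hVv.
have hv2p : 0 < v ^+ 2 by exact: exprn_gt0.
rewrite mulrA mulrA ler_pdivrMr //.
have e : v * (1 - v) * iN * 4 * G = v * iN * (4 * G * (1 - v)) by ring.
rewrite -[v * (1 - v) / n%:R]/(v * (1 - v) * iN) e.
have h3 : 0 <= v * iN by nra.
have h4 : 4 * G * (1 - v) <= 2 * v by nra.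
have h5 : v * iN * (4 * G * (1 - v)) <= v * iN * (2 * v) by exact: ler_wpM2l.
apply: le_trans h5 _.
have h6 : v * v * iN <= v * v * c by apply: ler_wpM2l => //; nra.
nra.
Qed.
End E.
End Aux.
Import Aux.
Lemma ln_ge1 (R : realType) (n : nat) : (4 <= n)%N -> 1 <= ln (n%:R : R).
Proof.
move=> hn.
have h2 : 0 < (2 : R) by [].
have hl2 : 1 / 2 <= ln (2 : R).
  have := @le_ln1Dx R (- (1/2)) ltac:(lra).
  have -> : 1 + - (1 / 2) = (2 : R)^-1 by field.
  rewrite lnV ?posrE //; lra.
have h4 : ln (4 : R) = ln (2 : R) *+ 2.
  by rewrite -lnXn //; congr ln; rewrite expr2; ring.
have : ln (4 : R) <= ln (n%:R : R).
  rewrite ler_ln ?posrE ?ltr0n //; last lia.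
  by rewrite ler_nat.
rewrite h4 mulr2n; lra.
Qed.

Theorem lemma3 (R : realType) (d : nat) (hd : (2 <= d)%N) (omega gamma : R)
    (homega0 : 0 < omega) (homega1 : omega < 1 / 2)
    (hgamma0 : 1 / (2 * (1 - omega)) < gamma) (hgamma1 : gamma < 1) :
  exists C : R, exists N : nat, forall n : nat, (N <= n)%N ->
    forall u : 'I_d -> R, (forall j, 0 <= u j <= 1) ->
      (n%:R) `^ (- gamma) <= gfun u ->
      `| binom_integral n u (fun w => gfun w `^ omega / gfun u `^ omega) - 1 |
        <= C * ((n%:R) `^ (- ((1 - gamma) / 2)) * ln (n%:R)).
Proof.
have hom1 : omega <= 1 by lra.
have hg0 : 0 < gamma.
  apply: lt_trans hgamma0; apply: divr_gt0; lra.
exists (4 * d%:R), 4%N => n hn u hu hGn.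
have hn0 : (0 < n)%N by lia.
have hN : 0 < (n%:R : R) by rewrite ltr0n.
have hN1 : 1 <= (n%:R : R) by rewrite ler1n; lia.
set G := gfun u in hGn *.
have hG : 0 < G by apply: lt_le_trans hGn; exact: powR_gt0.
have hiNG : (n%:R : R)^-1 <= G.
  apply: le_trans hGn; rewrite -powR_inv1; last exact: ltW.
  apply: ler_powR => //; lra.
set c := Num.sqrt (G / n%:R).
have hGn0 : 0 <= G / n%:R by apply: divr_ge0; apply: ltW.
have hc : 0 < c by rewrite sqrtr_gt0 divr_gt0.
have hc2 : c ^+ 2 = G / n%:R by rewrite sqr_sqrtr.
have hNc : (n%:R : R)^-1 <= c.
  have e : (n%:R : R)^-1 = Num.sqrt ((n%:R : R)^-1 ^+ 2).
    by rewrite sqrtr_sqr ger0_norm // invr_ge0 ltW.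
  rewrite e ler_sqrt // expr2 ler_wpM2r // invr_ge0 ltW //.
have hgrid : forall k : {ffun 'I_d -> 'I_n.+1}, in01 (fun j => (k j)%:R / (n%:R : R)).
  move=> k j; apply/andP; split; first by apply: divr_ge0; [exact: ler0n | exact: ltW].
  rewrite ler_pdivrMr // mul1r ler_nat; exact: (ltnSE (ltn_ord (k j))).
pose S := fun w : 'I_d -> R => \sum_(i < d)
     (psi G c (u i) (w i - u i) + psi G c (1 - u i) (w i - u i)).
have key : forall k : {ffun 'I_d -> 'I_n.+1},
   `| gfun (fun j => (k j)%:R / (n%:R : R)) `^ omega / G `^ omega - 1|
     <= G^-1 * S (fun j => (k j)%:R / (n%:R : R)).
  move=> k; apply: le_trans (powfrac (gfun_ge0 (hgrid k)) hG homega0 hom1) _.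
  rewrite [X in _ <= X]mulrC; apply: ler_wpM2r; first by rewrite invr_ge0 ltW.
  exact: (gdev hd hu (hgrid k) hG hc).
rewrite /binom_integral -[X in _ - X](mass_sum n u) -sumrB.
under eq_bigr do rewrite -[X in _ - X]mulr1 -mulrBr.
apply: le_trans (ler_norm_sum _ _ _) _.
apply: le_trans (_ : \sum_k binom_mass u k * (G^-1 * S (fun j => (k j)%:R / (n%:R : R))) <= _).
  apply: ler_sum => k _; rewrite normrM ger0_norm ?mass_ge0 //.
  by apply: ler_wpM2l; [exact: mass_ge0 | exact: key].
have E2 : \sum_(k : {ffun 'I_d -> 'I_n.+1}) binom_mass u k * (G^-1 * S (fun j => (k j)%:R / (n%:R : R))) =
  G^-1 * \sum_(i < d) (\sum_(a < n.+1) bm (u i) n a * psi G c (u i) (a%:R / n%:R - u i)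
     + \sum_(a < n.+1) bm (u i) n a * psi G c (1 - u i) (a%:R / n%:R - u i)).
  under eq_bigr do rewrite mulrCA.
  rewrite -mulr_sumr; congr (_ * _).
  rewrite /S; under eq_bigr do rewrite mulr_sumr.
  rewrite exchange_big /=; apply: eq_bigr => i _.
  rewrite (marg n u i (fun a => psi G c (u i) (a%:R / n%:R - u i) + psi G c (1 - u i) (a%:R / n%:R - u i))).
  by rewrite -big_split; apply: eq_bigr => a _; rewrite mulrDr.
rewrite E2.
have E3 : \sum_(i < d) (\sum_(a < n.+1) bm (u i) n a * psi G c (u i) (a%:R / n%:R - u i)
     + \sum_(a < n.+1) bm (u i) n a * psi G c (1 - u i) (a%:R / n%:R - u i)) <= d%:R * (4 * c).
  apply: le_trans (_ : \sum_(i < d) (4 * c) <= _).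
    apply: ler_sum => i _.
    have := Epsi (hu i) (or_introl erefl) hG hc hn0 hc2 hNc.
    have := Epsi (hu i) (or_intror erefl) hG hc hn0 hc2 hNc.
    lra.
  by rewrite sumr_const card_ord [d%:R * _]mulr_natl.
apply: le_trans (_ : G^-1 * (d%:R * (4 * c)) <= _).
  by apply: ler_wpM2l; [rewrite invr_ge0 ltW | exact: E3].
set P := n%:R `^ (- ((1 - gamma) / 2)).
have hP0 : 0 <= P by exact: powR_ge0.
have hnz : (n%:R : R) != 0 by rewrite pnatr_eq0 -lt0n.
have hGz : G != 0 by exact: lt0r_neq0.
have hcG : c / G <= P.
  have hcG0 : 0 <= c / G by apply: divr_ge0; apply: ltW.
  rewrite -(@ler_pXn2r R 2%N) // ?nnegrE //.
  have eP : P ^+ 2 = n%:R `^ gamma * (n%:R)^-1.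
    rewrite /P -powR_mulrn ?powR_ge0 // -powRrM.
    have -> : - ((1 - gamma) / 2) * 2%:R = gamma + (-1) by field.
    rewrite powRD; last by apply/implyP => _.
    by rewrite powR_inv1 // ltW.
  have hGi : G^-1 <= n%:R `^ gamma.
    rewrite -[n%:R `^ gamma]invrK -powRN ler_pV2 //.
      by rewrite inE /= unitfE hGz hG.
    by rewrite inE /= unitfE (lt0r_neq0 (powR_gt0 _ hN)) powR_gt0.
  have -> : (c / G) ^+ 2 = G^-1 * (n%:R)^-1 by rewrite expr_div_n hc2; field; rewrite hGz hnz.
  rewrite eP; apply: ler_wpM2r => //; by rewrite invr_ge0 ltW.
have hln := @ln_ge1 R n hn.
have -> : G^-1 * (d%:R * (4 * c)) = 4 * d%:R * (c / G) by ring.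
apply: ler_wpM2l; first by apply: mulr_ge0 => //; exact: ler0n.
apply: le_trans hcG _.
rewrite -[X in X <= _]mulr1; exact: ler_wpM2l.
Qed.
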